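(* Let $p$ be an odd prime, $K$ an algebraically closed field of characteristic $\ne p$, $G=\mathrm{PGL}_n(K)$, $n=p^st$ with $\gcd(p,t)=1$, $s,t\ge1$. Let $1\le r\le s$, $n=p^rk$, and $D=D_r\times(H\otimes I_{p^r})$ where $H$ is trivial or a toral elementary abelian $p$-subgroup of $\mathrm{PGL}_k(K)$ with connected centralizer in $\mathrm{PGL}_k(K)$. Then $C_G(D)=\langle C_G(D)^\circ,\bar B_0,\dots,\bar B_{r-1}\rangle=C_G(D)^\circ\cdot B_r$.
   Context: Fix a primitive $p$-th root of unity $\beta\in K$. For $0\le s'\le r-1$: $\sigma_{s'}$ is the permutation of $\{1,\dots,p^r\}$ with $\sigma_{s'}(i)=i+p^{s'}$ if $i\equiv1,\dots,(p-1)p^{s'}\pmod{p^{s'+1}}$ and $\sigma_{s'}(i)=i-(p-1)p^{s'}$ otherwise (residues in $\{1,\dots,p^{s'+1}\}$); $A_{s'}$ is diagonal $p^r\times p^r$ with $(A_{s'})_{ii}=\beta^{\lfloor(i-1)/p^{s'}\rfloor}$; $B_{s'}$ is the permutation matrix with $(B_{s'})_{ij}=1$ iff $\sigma_{s'}(i)=j$. $\bar A_{s'},\bar B_{s'}$ are the images in $\mathrm{PGL}_n(K)$ of $I_k\otimes A_{s'}$, $I_k\otimes B_{s'}$. $D_r=\langle\bar A_0,\dots,\bar A_{r-1}\rangle$, $B_r=\langle\bar B_0,\dots,\bar B_{r-1}\rangle$. $H\otimes I_{p^r}$ is the image of $\{h\otimes I_{p^r}\}$. Toral: in a maximal torus.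 *)

(* Defs.v *)
From HB Require Import structures.
From mathcomp Require Import all_boot all_order all_algebra.
From mathcomp Require Import mpoly.
Set Implicit Arguments. Unset Strict Implicit. Unset Printing Implicit Defensive.
Import Order.TTheory GRing.Theory.
Local Open Scope ring_scope.

Section PGL.
Variable K : fieldType.

Definition mxn {m n'} (A : 'M[K]_(m, n')) (a b : nat) : K :=
  match @insub _ (fun x => x < m)%N 'I_m a, @insub _ (fun x => x < n')%N 'I_n' b with
  | Some i, Some j => A i j
  | _, _ => 0
  end.

(* Kronecker product A (x) B, row index a*q+b *)
Definition kron {m q} (A : 'M[K]_m) (B : 'M[K]_q) : 'M[K]_(m * q) :=
  \matrix_(i, j) (mxn A (i %/ q) (j %/ q) * mxn B (i %% q) (j %% q)).

Variable m : nat.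

(* Subsets of PGL_m(K) are represented by their (scalar-saturated) preimages
   in GL_m(K), i.e. predicates on invertible matrices. *)
Definition saturated (F : 'M[K]_m -> Prop) :=
  forall A c, A \in unitmx -> c != 0 -> F A -> F (c *: A).

Definition is_scalar_unit (A : 'M[K]_m) := exists c : K, c != 0 /\ A = c%:M.

Definition GLsubgroup (H : 'M[K]_m -> Prop) :=
  [/\ H 1%:M, (forall A B, H A -> H B -> H (A *m B))
    & (forall A, H A -> A \in unitmx /\ H (invmx A))].

Definition gen (S : 'M[K]_m -> Prop) (X : 'M[K]_m) :=
  forall H, GLsubgroup H -> (forall Y, S Y -> H Y) -> H X.

(* preimage in GL_m of the subgroup of PGL_m generated by the images of S *)
Definition pgen (S : 'M[K]_m -> Prop) :=
  gen (fun X => S X \/ is_scalar_unit X).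

(* preimage of the centralizer in PGL_m of the image of S *)
Definition pcent (S : 'M[K]_m -> Prop) (X : 'M[K]_m) :=
  X \in unitmx /\ forall d, S d -> exists c : K, c != 0 /\ X *m d = c *: (d *m X).

Definition Zclosed (F : 'M[K]_m -> Prop) :=
  exists S : {mpoly K[m * m]} -> Prop, forall A, A \in unitmx ->
    (F A <-> forall q, S q -> q.@[fun i => mxvec A 0 i] = 0).

(* closed subsets of PGL_m (quotient topology) *)
Definition PZclosed F := Zclosed F /\ saturated F.

Definition Pconnected (Z : 'M[K]_m -> Prop) :=
  forall F1 F2, PZclosed F1 -> PZclosed F2 ->
    (forall A, Z A -> F1 A \/ F2 A) -> (forall A, Z A -> F1 A -> F2 A -> False) ->
    (forall A, Z A -> F1 A) \/ (forall A, Z A -> F2 A).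

Definition idcomp (Y : 'M[K]_m -> Prop) (X : 'M[K]_m) :=
  exists Z : 'M[K]_m -> Prop, [/\ (forall A, Z A -> Y A), saturated Z, Z 1%:M,
    Pconnected Z & Z X].

Definition PGLsubgroup (H : 'M[K]_m -> Prop) := GLsubgroup H /\ saturated H.

Definition trivialP (H : 'M[K]_m -> Prop) := forall A, H A <-> is_scalar_unit A.

Definition toral_elab_psubgroup (p : nat) (H : 'M[K]_m -> Prop) :=
  [/\ PGLsubgroup H,
      (forall A B, H A -> H B -> exists c : K, c != 0 /\ A *m B = c *: (B *m A)),
      (forall A, H A -> is_scalar_unit (iter p (mulmx A) 1%:M)) &
      (* toral: contained in a maximal torus (conjugate of the diagonal torus) *)
      (exists x, x \in unitmx /\ forall A, H A -> is_diag_mx (x *m A *m invmx x))].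

Definition connected_centralizer (H : 'M[K]_m -> Prop) :=
  forall X, pcent H X -> idcomp (pcent H) X.

End PGL.

(* sigma_{s'} on 0-based indices {0,...,p^r-1} *)
Definition sigma (p s' i : nat) : nat :=
  if (i %% p ^ s'.+1 < (p - 1) * p ^ s')%N then (i + p ^ s')%N
  else (i - (p - 1) * p ^ s')%N.

Definition Amat (K : fieldType) (p r : nat) (beta : K) (s' : nat) : 'M[K]_(p ^ r) :=
  \matrix_(i, j) (if i == j then beta ^+ (i %/ p ^ s') else 0).

Definition Bmat (K : fieldType) (p r s' : nat) : 'M[K]_(p ^ r) :=
  \matrix_(i, j) ((sigma p s' i == j)%:R).

(* Main.v *)
Require Import Defs.
From HB Require Import structures.
From mathcomp Require Import all_boot all_order all_algebra.
From mathcomp Require Import mpoly.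
From mathcomp Require Import mxtens perm zify.
From Stdlib Require Import Classical.
Import GRing.Theory.
Local Open Scope ring_scope.
Set Implicit Arguments. Unset Strict Implicit. Unset Printing Implicit Defensive.

Section Kron.
Variable K : fieldType.

Lemma mxnE m n' (A : 'M[K]_(m, n')) a b (ha : (a < m)%N) (hb : (b < n')%N) :
  mxn A a b = A (Ordinal ha) (Ordinal hb).
Proof. by rewrite /mxn !insubT. Qed.

Lemma kron_tens m q (A : 'M[K]_m) (B : 'M[K]_q) : kron A B = A *t B.
Proof.
apply/matrixP => i j; rewrite !mxE.
rewrite (mxnE A (mxtens_index_proof1 i) (mxtens_index_proof1 j)).
by rewrite (mxnE B (mxtens_index_proof2 i) (mxtens_index_proof2 j)).
Qed.

Lemma kron_mul m q (A C : 'M[K]_m) (B D : 'M[K]_q) :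
  kron A B *m kron C D = kron (A *m C) (B *m D).
Proof. by rewrite !kron_tens tensmx_mul. Qed.

Lemma kron11 m q : kron (1%:M : 'M[K]_m) (1%:M : 'M[K]_q) = 1%:M.
Proof.
rewrite kron_tens; apply/matrixP => i j.
case: (mxtens_indexP i) => a b; case: (mxtens_indexP j) => a' b'.
rewrite tensmxE !mxE -natrM mulnb; congr (_%:R).
have := inj_eq (can_inj (@mxtens_indexK m q)) (a, b) (a', b').
by move=> ->; rewrite xpair_eqE.
Qed.

Lemma kronZ m q c (A : 'M[K]_m) (B : 'M[K]_q) : kron (c *: A) B = c *: kron A B.
Proof. by rewrite !kron_tens; apply/matrixP => i j; rewrite !mxE mulrA. Qed.

Lemma kron_unit m q (A : 'M[K]_m) (B : 'M[K]_q) :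
  A \in unitmx -> B \in unitmx -> kron A B \in unitmx.
Proof.
move=> uA uB; have : kron A B *m kron (invmx A) (invmx B) = 1%:M.
  by rewrite kron_mul !mulmxV // kron11.
by case/mulmx1_unit.
Qed.

Lemma sum_tens m n (F : 'I_(m * n) -> K) :
  \sum_(l < m * n) F l = \sum_(i < m) \sum_(j < n) F (mxtens_index (i, j)).
Proof.
rewrite (reindex (@mxtens_index m n)) /=; last first.
  by exists (@mxtens_unindex m n) => i _; rewrite (mxtens_indexK, mxtens_unindexK).
by rewrite pair_big; apply: eq_bigr => -[].
Qed.

End Kron.

Section Grp.
Variable K : fieldType.
Variable m : nat.
Implicit Types (A B X Y M : 'M[K]_m) (S T : 'M[K]_m -> Prop).

Definition mpow M j := iter j (mulmx M) 1%:M.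

Lemma mpowS M j : mpow M j.+1 = M *m mpow M j. Proof. by []. Qed.

Lemma comm_pow X M c j : X *m M = c *: (M *m X) ->
  X *m mpow M j = c ^+ j *: (mpow M j *m X).
Proof.
move=> h; elim: j => [|j IH]; first by rewrite /= mulmx1 mul1mx expr0 scale1r.
rewrite mpowS mulmxA h -scalemxAl -mulmxA IH -scalemxAr scalerA mulmxA.
by rewrite exprS.
Qed.

Lemma scalar_unit c : c != 0 -> (c%:M : 'M[K]_m) \in unitmx.
Proof. by move=> c0; rewrite unitmxE det_scalar unitfE expf_neq0. Qed.

Lemma gen_sub S X : S X -> gen S X.
Proof. by move=> SX H _; apply. Qed.

Lemma gen_mul S A B : gen S A -> gen S B -> gen S (A *m B).
Proof. by move=> gA gB H gH hS; case: (gH) => _ hM _; apply: hM; [apply: gA | apply: gB]. Qed.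

Lemma gen_mono S T X : (forall Y, S Y -> gen T Y) -> gen S X -> gen T X.
Proof. by move=> hST gX H gH hT; apply: gX => // Y /hST; apply. Qed.

Lemma pcent_group T : GLsubgroup (pcent T).
Proof.
split.
- split; first exact: unitmx1.
  by move=> d _; exists 1; rewrite oner_eq0 scale1r mul1mx mulmx1.
- move=> A B [uA hA] [uB hB]; split; first by rewrite unitmx_mul uA uB.
  move=> d Td; have [c [c0 hc]] := hA d Td; have [c' [c'0 hc']] := hB d Td.
  exists (c * c'); split; first by rewrite mulf_neq0.
  rewrite -mulmxA hc' -scalemxAr [A *m (d *m B)]mulmxA hc -scalemxAl scalerA mulrC.
  by rewrite !mulmxA.
- move=> A [uA hA]; split => //; split; first by rewrite unitmx_inv.
  move=> d Td; have [c [c0 hc]] := hA d Td.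
  exists c^-1; split; first by rewrite invr_eq0.
  have e : d *m invmx A = c *: (invmx A *m d).
    have := congr1 (fun M => invmx A *m M *m invmx A) hc.
    rewrite /= -!scalemxAr -!scalemxAl !mulmxA mulVmx // mul1mx.
    rewrite -[invmx A *m d *m A *m invmx A]mulmxA mulmxV // mulmx1 => <-.
    by [].
  by rewrite e scalerA mulVf // scale1r.
Qed.

Lemma pcent_scalar T X : is_scalar_unit X -> pcent T X.
Proof.
move=> [c [c0 ->]]; split; first exact: scalar_unit.
by move=> d _; exists 1; rewrite oner_eq0 scale1r scalar_mxC.
Qed.

Lemma pgen_sub_group H S X : GLsubgroup H -> (forall Y, is_scalar_unit Y -> H Y) ->
  (forall Y, S Y -> H Y) -> pgen S X -> H X.
Proof. by move=> gH hs hS gX; apply: gX => // Y [/hS|/hs]. Qed.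

Lemma pcent_pgen S X : (forall d, S d -> d \in unitmx) ->
  pcent (pgen S) X <->
  (X \in unitmx /\ forall d, S d -> exists c : K, c != 0 /\ X *m d = c *: (d *m X)).
Proof.
move=> Su; split.
  by move=> [uX hX]; split => // d Sd; apply: hX; apply: gen_sub; left.
move=> [uX hX]; split => // d.
pose Hx := fun d : 'M[K]_m => d \in unitmx /\
  exists c : K, c != 0 /\ X *m d = c *: (d *m X).
have gH : GLsubgroup Hx.
  split.
  - split; first exact: unitmx1.
    by exists 1; rewrite oner_eq0 scale1r mul1mx mulmx1.
  - move=> A B [uA [c [c0 hc]]] [uB [c' [c'0 hc']]].
    split; first by rewrite unitmx_mul uA uB.
    exists (c * c'); split; first by rewrite mulf_neq0.
    rewrite mulmxA hc -scalemxAl -mulmxA hc' -scalemxAr scalerA mulmxA.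
    by [].
  - move=> A [uA [c [c0 hc]]]; split => //; split; first by rewrite unitmx_inv.
    exists c^-1; split; first by rewrite invr_eq0.
    have e : invmx A *m X = c *: (X *m invmx A).
      have := congr1 (fun M => invmx A *m M *m invmx A) hc.
      rewrite /= -!scalemxAr -!scalemxAl !mulmxA mulVmx // mul1mx.
      by rewrite -[invmx A *m X *m A *m invmx A]mulmxA mulmxV // mulmx1.
    by rewrite e scalerA mulVf // scale1r.
move=> gd; have : Hx d.
  apply: (pgen_sub_group gH _ _ gd).
    move=> Y [c [c0 ->]]; split; first exact: scalar_unit.
    by exists 1; rewrite oner_eq0 scale1r scalar_mxC.
  by move=> Y SY; split; [apply: Su | apply: hX].
by case.
Qed.

End Grp.

Section Zc.
Variable K : fieldType.
Variable m : nat.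

Lemma L0 (L : 'M[K]_m -> 'M[K]_m) (hL : forall c A B, L (c *: A + B) = c *: L A + L B) :
  L 0 = 0.
Proof.
have h := hL 1 0 0; rewrite !scale1r addr0 in h.
by apply: (addrI (L 0)); rewrite addr0 -h.
Qed.

Lemma L_sum (L : 'M[K]_m -> 'M[K]_m) (hL : forall c A B, L (c *: A + B) = c *: L A + L B)
  N (c : 'I_N -> K) (V : 'I_N -> 'M[K]_m) :
  L (\sum_(l < N) c l *: V l) = \sum_(l < N) c l *: L (V l).
Proof.
elim: N c V => [|N IH] c V; first by rewrite !big_ord0 L0.
by rewrite !big_ord_recl hL IH.
Qed.

Lemma Zclosed_lin (L : 'M[K]_m -> 'M[K]_m)
  (hL : forall c A B, L (c *: A + B) = c *: L A + L B) :
  PZclosed (fun A => L A = 0).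
Proof.
split; last first.
  rewrite /saturated => A c _ _ LA; have h := hL c A 0; rewrite addr0 (L0 hL) LA scaler0 addr0 in h; exact: h.
pose S := fun q : {mpoly K[m * m]} => exists i j,
  q = \sum_(l < m * m) (L (vec_mx (delta_mx 0 l)) i j) *: 'X_l.
exists S => A _.
have key : forall i j,
  (\sum_(l < m * m) (L (vec_mx (delta_mx 0 l)) i j) *: 'X_l).@[fun l => mxvec A 0 l]
   = L A i j.
  move=> i j; rewrite raddf_sum /=.
  have eA : A = \sum_(l < m * m) mxvec A 0 l *: vec_mx (delta_mx 0 l).
    rewrite -{1}(mxvecK A) {1}(row_sum_delta (mxvec A)) linear_sum /=.
    by apply: eq_bigr => l _; rewrite linearZ.
  rewrite [X in L X]eA L_sum // summxE; apply: eq_bigr => l _.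
  by rewrite mevalZ mevalXU mxE mulrC.
split.
  by move=> LA q [i [j ->]]; rewrite key LA mxE.
move=> h; apply/matrixP => i j; rewrite mxE -key; apply: h.
by exists i, j.
Qed.

End Zc.

Lemma unit_neq0 (K : fieldType) m (A : 'M[K]_m) : (0 < m)%N -> A \in unitmx -> A != 0.
Proof.
case: m A => // m A _ uA; apply/eqP => A0.
by rewrite A0 unitmxE det0 unitr0 in uA.
Qed.

Section Part.
Variable K : fieldType.
Variable m : nat.
Hypothesis m0 : (0 < m)%N.
Implicit Types (A B X Y M : 'M[K]_m) (S T : 'M[K]_m -> Prop).

Lemma mpowD M a b : mpow M a *m mpow M b = mpow M (a + b).
Proof. by elim: a => [|a IH]; rewrite ?mul1mx // addSn mpowS -mulmxA IH. Qed.
Lemma mpow_unit M j : M \in unitmx -> mpow M j \in unitmx.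
Proof. by move=> uM; elim: j => [|j IH]; rewrite ?unitmx1 // mpowS unitmx_mul uM. Qed.

Lemma char_root (p : nat) A M c : (0 < p)%N -> A \in unitmx ->
  is_scalar_unit (mpow M p) -> A *m M = c *: (M *m A) -> c ^+ p = 1.
Proof.
move=> p0 uA [l [l0 hl]] hc; have := comm_pow p hc; rewrite hl.
rewrite mul_mx_scalar mul_scalar_mx scalerA => /eqP.
rewrite -subr_eq0 -scalerBl scaler_eq0 (negbTE (unit_neq0 m0 uA)) orbF.
by rewrite -{1}[l]mul1r -mulrBl mulf_eq0 (negbTE l0) orbF subr_eq0 eq_sym => /eqP.
Qed.

Lemma comm_of_conn (p : nat) (h x : 'M[K]_m) (Z : 'M[K]_m -> Prop) :
  prime p -> p%:R != 0 :> K -> h \in unitmx -> is_scalar_unit (mpow h p) ->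
  (forall A, Z A -> A \in unitmx /\ exists c : K, c != 0 /\ A *m h = c *: (h *m A)) ->
  Z 1%:M -> Pconnected Z -> Z x -> x *m h = h *m x.
Proof.
move=> pp pn0 uh hp hZ Z1 cZ Zx.
have p0 : (0 < p)%N by apply: prime_gt0.
pose L1 := fun A => A *m h - h *m A.
pose L2 := fun A => \sum_(j < p) mpow h (p.-1 - j) *m A *m mpow h j.
have hL1 : forall c A B, L1 (c *: A + B) = c *: L1 A + L1 B.
  move=> c A B; rewrite /L1 mulmxDl mulmxDr -scalemxAl -scalemxAr scalerBr.
  by rewrite addrACA opprD.
have hL2 : forall c A B, L2 (c *: A + B) = c *: L2 A + L2 B.
  move=> c A B; rewrite /L2 scaler_sumr -big_split /=; apply: eq_bigr => j _.
  by rewrite mulmxDr mulmxDl -scalemxAr -scalemxAl.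
have cl1 := Zclosed_lin hL1; have cl2 := Zclosed_lin hL2.
have e1 : forall A, A *m h = h *m A -> L2 A = (mpow h p.-1 *m A) *+ p.
  move=> A hA; rewrite /L2 (eq_bigr (fun => mpow h p.-1 *m A)).
    by rewrite sumr_const card_ord.
  move=> j _; have := comm_pow j (c := 1) (X := A) (M := h); rewrite scale1r expr1n scale1r.
  move=> /(_ hA) hAj; rewrite -mulmxA hAj mulmxA mpowD subnK //.
  by rewrite -ltnS (prednK p0).
have key : forall A, Z A -> ((L1 A = 0) \/ (L2 A = 0)) /\ ~ ((L1 A = 0) /\ (L2 A = 0)).
  move=> B ZB; have [uA [c [c0 hc]]] := hZ B ZB.
  have cp := char_root p0 uA hp hc.
  split; last first.
    move=> [/eqP h1 /eqP h2]; move: h1; rewrite /L1 subr_eq0 => /eqP h1.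
    move: h2; rewrite e1 // -scaler_nat scaler_eq0 (negbTE pn0) /=.
    by rewrite (negbTE (unit_neq0 m0 _)) // unitmx_mul mpow_unit.
  have [/eqP c1|c1] := boolP (c == 1).
    by left; rewrite /L1 hc c1 scale1r subrr.
  right; rewrite /L2.
  have -> : \sum_(j < p) mpow h (p.-1 - j) *m B *m mpow h j
           = (\sum_(j < p) c ^+ j) *: (mpow h p.-1 *m B).
    rewrite scaler_suml; apply: eq_bigr => j _.
    rewrite -mulmxA (comm_pow j hc) -scalemxAr mulmxA mpowD subnK //.
    by rewrite -ltnS (prednK p0).
  have : (c - 1) * \sum_(j < p) c ^+ j = 0 by rewrite -subrX1 cp subrr.
  by move=> /eqP; rewrite mulf_eq0 subr_eq0 (negbTE c1) /= => /eqP ->; rewrite scale0r.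
have := cZ (fun A => L1 A = 0) (fun A => L2 A = 0) cl1 cl2.
case.
- by move=> A /key [].
- by move=> A /key [_ hn] a b; apply: hn.
- by move=> hall; have := hall x Zx; rewrite /L1 => /eqP; rewrite subr_eq0 => /eqP.
- move=> hall; exfalso; have := (key _ Z1).2; apply; split; last exact: hall.
  by rewrite /L1 mul1mx mulmx1 subrr.
Qed.
End Part.

Section Line.
Variable K : closedFieldType.
Variable m : nat.

Definition vp (U0 V0 : 'M[K]_m) (l : 'I_(m * m)) : {poly K} :=
  (mxvec U0 0 l)%:P + (mxvec V0 0 l)%:P * 'X.

Definition fq (U0 V0 : 'M[K]_m) (q : {mpoly K[m * m]}) : {poly K} :=
  \sum_(mm <- msupp q) (q@_mm)%:P * \prod_i (vp U0 V0 i) ^+ mm i.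

Lemma fq_eval U0 V0 q t :
  (fq U0 V0 q).[t] = q.@[fun l => mxvec (U0 + t *: V0) 0 l].
Proof.
rewrite mevalE /fq horner_sum; apply: eq_bigr => mm _.
rewrite hornerM hornerC horner_prod; congr (_ * _); apply: eq_bigr => i _.
rewrite horner_exp /vp hornerD hornerC hornerM hornerC hornerX.
by rewrite linearD linearZ /= !mxE mulrC.
Qed.

Definition gdet (U0 V0 : 'M[K]_m) : {poly K} :=
  \det (\matrix_(i, j) ((U0 i j)%:P + (V0 i j)%:P * 'X)).

Lemma gdet_eval U0 V0 t : (gdet U0 V0).[t] = \det (U0 + t *: V0).
Proof.
rewrite /gdet -[_.[t]]/(horner_eval t _) -det_map_mx; congr (\det _).
apply/matrixP => i j; rewrite !mxE; rewrite -[LHS]/(_ .[t]) hornerD hornerC hornerM hornerC hornerX.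
by rewrite mulrC.
Qed.

Lemma line_conn (U0 V0 : 'M[K]_m) F1 F2 : U0 \in unitmx ->
  PZclosed F1 -> PZclosed F2 ->
  (forall t, (U0 + t *: V0) \in unitmx -> F1 (U0 + t *: V0) \/ F2 (U0 + t *: V0)) ->
  (forall t, (U0 + t *: V0) \in unitmx -> F1 (U0 + t *: V0) -> F2 (U0 + t *: V0) -> False) ->
  (forall t, (U0 + t *: V0) \in unitmx -> F1 (U0 + t *: V0)) \/
  (forall t, (U0 + t *: V0) \in unitmx -> F2 (U0 + t *: V0)).
Proof.
move=> uU [[S1 hS1] _] [[S2 hS2] _] hcov hdis.
have [[q1 [Sq1 nq1]]|all1] := classic (exists q, S1 q /\ fq U0 V0 q != 0); last first.
  left => t ut; apply/(hS1 _ ut) => q Sq; rewrite -fq_eval.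
  case: (eqVneq (fq U0 V0 q) 0) => [->|nz]; first by rewrite horner0.
  by exfalso; apply: all1; exists q.
have [[q2 [Sq2 nq2]]|all2] := classic (exists q, S2 q /\ fq U0 V0 q != 0); last first.
  right => t ut; apply/(hS2 _ ut) => q Sq; rewrite -fq_eval.
  case: (eqVneq (fq U0 V0 q) 0) => [->|nz]; first by rewrite horner0.
  by exfalso; apply: all2; exists q.
have g0 : gdet U0 V0 != 0.
  apply/eqP => g0; have := gdet_eval U0 V0 0; rewrite g0 horner0 scale0r addr0.
  by move=> /esym dz; move: uU; rewrite unitmxE dz unitr0.
have nzP : fq U0 V0 q1 * fq U0 V0 q2 * gdet U0 V0 != 0 by rewrite !mulf_neq0.
have [t] := closed_nonrootP _ nzP.
rewrite /root !hornerM !mulf_eq0 !negb_or => /andP [/andP [n1 n2] n3].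
have ut : (U0 + t *: V0) \in unitmx by rewrite unitmxE unitfE -gdet_eval.
case: (hcov t ut) => [/(hS1 _ ut) h|/(hS2 _ ut) h].
  by move: n1; rewrite fq_eval (h _ Sq1) eqxx.
by move: n2; rewrite fq_eval (h _ Sq2) eqxx.
Qed.

Lemma line_unit_nz (U0 V0 : 'M[K]_m) : U0 \in unitmx ->
  exists t, t != 0 /\ (U0 + t *: V0) \in unitmx.
Proof.
move=> uU; have g0 : gdet U0 V0 != 0.
  apply/eqP => g0; have := gdet_eval U0 V0 0; rewrite g0 horner0 scale0r addr0.
  by move=> /esym dz; move: uU; rewrite unitmxE dz unitr0.
have nz : 'X * gdet U0 V0 != 0 by rewrite mulf_neq0 // polyX_eq0.
have [t] := closed_nonrootP _ nz.
rewrite /root hornerM hornerX mulf_eq0 negb_or => /andP [t0 n3].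
by exists t; split => //; rewrite unitmxE unitfE -gdet_eval.
Qed.

Lemma unit_neq0' (A : 'M[K]_m) : (0 < m)%N -> A \in unitmx -> A != 0.
Proof.
case: m A => // m' A _ uA; apply/eqP => A0.
by rewrite A0 unitmxE det0 unitr0 in uA.
Qed.

Lemma pencil_idcomp (C : 'M[K]_m -> Prop) (Y : 'M[K]_m) : (0 < m)%N ->
  Y \in unitmx ->
  (forall a b, (a *: 1%:M + b *: Y) \in unitmx -> C (a *: 1%:M + b *: Y)) ->
  idcomp C Y.
Proof.
move=> m0 uY hC.
pose Z := fun M => exists a b, M = a *: 1%:M + b *: Y /\ M \in unitmx.
exists Z; split.
- by move=> A [a [b [-> uA]]]; apply: hC.
- move=> A c uA c0 [a [b [eA _]]]; exists (c * a), (c * b).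
  split; first by rewrite eA scalerDr !scalerA.
  by rewrite unitmxZ ?unitfE.
- by rewrite /Z; exists 1, 0; rewrite scale1r scale0r addr0; split => //; apply: unitmx1.
- move=> F1 F2 c1 c2 hcov hdis.
  have la := line_conn (U0 := 1%:M) (V0 := Y) (unitmx1 _ _) c1 c2.
  have lb := line_conn (U0 := Y) (V0 := 1%:M) uY c1 c2.
  have Za : forall t, (1%:M + t *: Y) \in unitmx -> Z (1%:M + t *: Y).
    by move=> t ut; exists 1, t; rewrite scale1r; split.
  have Zb : forall t, (Y + t *: 1%:M) \in unitmx -> Z (Y + t *: 1%:M).
    move=> t ut; exists t, 1; split => //; by rewrite scale1r addrC.
  have [t [t0 ut]] := line_unit_nz Y (@unitmx1 _ _).
  have eM : t *: (Y + t^-1 *: 1%:M) = 1%:M + t *: Y.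
    by rewrite scalerDr scalerA divff // scale1r addrC.
  have ut' : (Y + t^-1 *: 1%:M) \in unitmx.
    have : (t *: (Y + t^-1 *: 1%:M)) \in unitmx by rewrite eM.
    by rewrite unitmxZ // unitfE.
  have sat1 := c1.2; have sat2 := c2.2.
  have fin : forall F : 'M[K]_m -> Prop, saturated F ->
      (forall t, (1%:M + t *: Y) \in unitmx -> F (1%:M + t *: Y)) ->
      (forall t, (Y + t *: 1%:M) \in unitmx -> F (Y + t *: 1%:M)) ->
      forall M, Z M -> F M.
    move=> F sF hA hB M [a [b [-> uM]]].
    have [a0|a0] := eqVneq a 0.
      move: uM; rewrite a0 scale0r add0r => uM.
      have b0 : b != 0.
        apply/eqP => b0; move: uM; rewrite b0 scale0r => u0.
        by have := unit_neq0' m0 u0; rewrite eqxx.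
      have uY' : (Y + 0 *: 1%:M) \in unitmx by rewrite scale0r addr0.
      have := sF _ b uY' b0 (hB 0 uY'); by rewrite scale0r addr0.
    have eM2 : a *: 1%:M + b *: Y = a *: (1%:M + (a^-1 * b) *: Y).
      by rewrite scalerDr scalerA mulrA divff // mul1r.
    move: uM; rewrite eM2 => uM.
    have uN : (1%:M + (a^-1 * b) *: Y) \in unitmx by move: uM; rewrite unitmxZ ?unitfE.
    exact: sF _ a uN a0 (hA _ uN).
  have [ha|ha] := la (fun t ut => hcov _ (Za t ut)) (fun t ut => hdis _ (Za t ut));
  have [hb|hb] := lb (fun t ut => hcov _ (Zb t ut)) (fun t ut => hdis _ (Zb t ut)).
  - by left; apply: fin.
  - exfalso; apply: (hdis _ (Za t ut) (ha t ut)); rewrite -eM.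
    by apply: sat2 => //; apply: hb.
  - exfalso; apply: (hdis _ (Za t ut) _ (ha t ut)); rewrite -eM.
    by apply: sat1 => //; apply: hb.
  - by right; apply: fin.
- by rewrite /Z; exists 0, 1; rewrite scale0r add0r scale1r; split.
Qed.

End Line.

Section Arith.
Variables (p s' : nat).
Hypothesis p1 : (1 < p)%N.
Local Notation P := (p ^ s')%N.
Local Notation P1 := (p ^ s'.+1)%N.

Lemma P1E : P1 = (p * P)%N. Proof. by rewrite expnS. Qed.
Lemma Ppos : (0 < P)%N. Proof. by rewrite expn_gt0 (ltn_trans _ p1). Qed.

Lemma modP1 a v : (v < P1)%N -> ((a * P1 + v) %% P1 = v)%N.
Proof. by move=> hv; rewrite modnMDl modn_small. Qed.
Lemma divP1 a v : (v < P1)%N -> ((a * P1 + v) %/ P1 = a)%N.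
Proof. by move=> hv; rewrite divnMDl ?divn_small ?addn0 // (leq_ltn_trans _ hv). Qed.

Lemma sig_case1 x : (x %% P1 < (p - 1) * P)%N ->
  sigma p s' x = (x + P)%N /\ ((x + P) %% P1 = x %% P1 + P)%N.
Proof.
move=> h; split; first by rewrite /sigma h.
have hx := divn_eq x P1; set a := (x %/ P1)%N in hx *; set w := (x %% P1)%N in hx h *.
have hw : (w + P < P1)%N.
  rewrite P1E; have := Ppos; nia.
by rewrite {1}hx -addnA modP1.
Qed.

Lemma sig_case2 x : ~~ (x %% P1 < (p - 1) * P)%N ->
  (sigma p s' x + (p - 1) * P = x)%N /\
  (sigma p s' x %% P1 + (p - 1) * P = x %% P1)%N.
Proof.
move=> h; have hx := divn_eq x P1; set a := (x %/ P1)%N in hx *.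
set w := (x %% P1)%N in hx h *.
have wl : (w < P1)%N by rewrite ltn_mod expn_gt0 (ltn_trans _ p1).
rewrite -leqNgt in h.
have e : sigma p s' x = (a * P1 + (w - (p - 1) * P))%N.
  rewrite /sigma -/w ltnNge h /=; rewrite {1}hx; lia.
have e2 : (sigma p s' x %% P1 = w - (p - 1) * P)%N.
  by rewrite e modP1 //; apply: leq_ltn_trans wl; apply: leq_subr.
rewrite e2; set c := ((p - 1) * P)%N in h e e2 *.
set Q := P1 in hx wl e e2 *; clearbody a w c Q; split; first by rewrite e hx; lia.
lia.
Qed.

Lemma P1E' : (P1 = (p - 1) * P + P)%N.
Proof. rewrite P1E; have := p1; case: p => // p' _; rewrite subSS subn0 mulSn addnC. by []. Qed.

Lemma sig_inj x y : sigma p s' x = sigma p s' y -> x = y.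
Proof.
have E := P1E'.
have wlx : (x %% P1 < P1)%N by rewrite ltn_mod expn_gt0 (ltn_trans _ p1).
have wly : (y %% P1 < P1)%N by rewrite ltn_mod expn_gt0 (ltn_trans _ p1).
case: (boolP (x %% P1 < (p - 1) * P)%N) => hx;
case: (boolP (y %% P1 < (p - 1) * P)%N) => hy.
- by have [-> _] := sig_case1 hx; have [-> _] := sig_case1 hy => /addIn.
- have [ex mx] := sig_case1 hx; have [ey my] := sig_case2 hy.
  move=> e; exfalso; move: mx my; rewrite -ex e.
  move: (sigma p s' y %% P1)%N (x %% P1)%N (y %% P1)%N E wly => a b c; lia.
- have [ex mx] := sig_case2 hx; have [ey my] := sig_case1 hy.
  move=> e; exfalso; move: mx my; rewrite -ey -e.
  move: (sigma p s' x %% P1)%N (x %% P1)%N (y %% P1)%N E wlx => a b c; lia.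
- have [ex _] := sig_case2 hx; have [ey _] := sig_case2 hy.
  by move=> e; rewrite -ex -ey e.
Qed.

Lemma sig_lt r x : (s' < r)%N -> (x < p ^ r)%N -> (sigma p s' x < p ^ r)%N.
Proof.
move=> sr xr; case: (boolP (x %% P1 < (p - 1) * P)%N) => hx; last first.
  by have [e _] := sig_case2 hx; apply: leq_ltn_trans xr; rewrite -{2}e leq_addr.
have [-> _] := sig_case1 hx.
have eq : (p ^ r = P1 * p ^ (r - s'.+1))%N by rewrite -expnD subnKC.
have hxx := divn_eq x P1.
have wl : (x %% P1 + P < P1)%N.
  by move: hx; rewrite P1E'; lia.
rewrite eq; move: xr; rewrite eq.
set a := (x %/ P1)%N in hxx; set w := (x %% P1)%N in hxx wl.
rewrite hxx; clearbody a w; move: (p ^ (r - s'.+1))%N P1 P wl => R Q PP wl h.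
have aR : (a < R)%N by nia.
nia.
Qed.

Section Beta.
Variable K : fieldType.
Variable b : K.
Hypothesis hb : p.-primitive_root b.

Lemma beta_mulp n k : b ^+ (n + p * k) = b ^+ n.
Proof. by rewrite exprD exprM (prim_expr_order hb) expr1n mulr1. Qed.

Lemma shift y e s'' : (y %% P1 + e * P < P1)%N ->
  b ^+ ((y + e * P) %/ p ^ s'') = (if s' == s'' then b ^+ e else 1) * b ^+ (y %/ p ^ s'').
Proof.
move=> hy; case: (ltngtP s'' s') => hs.
- have eP : P = (p ^ s'' * p ^ (s' - s''))%N by rewrite -expnD subnKC // ltnW.
  have -> : (y + e * P = y + (e * p ^ (s' - s'')) * p ^ s'')%N.
    by rewrite eP mulnCA mulnC.
  rewrite divnDMl ?expn_gt0 ?(ltn_trans _ p1) //.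
  have -> : (s' - s'' = (s' - s'').-1.+1)%N by rewrite prednK // subn_gt0.
  by rewrite expnS mulnCA beta_mulp mul1r.
- have eQ : (p ^ s'' = P1 * p ^ (s'' - s'.+1))%N by rewrite -expnD subnKC.
  have e1 : ((y + e * P) %/ P1 = y %/ P1)%N.
    by rewrite {1}(divn_eq y P1) -addnA divP1.
  by rewrite eQ !divnMA e1 mul1r.
- by rewrite hs divnDMl ?Ppos // exprD mulrC.
Qed.
End Beta.

End Arith.

Section Conc.
Variable K : fieldType.
Variables (p r : nat) (beta : K).
Hypothesis p1 : (1 < p)%N.
Hypothesis hb : p.-primitive_root beta.

Lemma Amat_diag s' : Amat p r beta s' = diag_mx (\row_(i < p ^ r) beta ^+ (i %/ p ^ s')).
Proof.
apply/matrixP => i j; rewrite !mxE; case: (eqVneq i j) => [->|ne].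
  by rewrite mulr1n.
by rewrite mulr0n.
Qed.

Lemma BA s' s'' : (s' < r)%N ->
  Bmat K p r s' *m Amat p r beta s'' = (if s' == s'' then beta else 1) *: (Amat p r beta s'' *m Bmat K p r s').
Proof.
move=> sr; rewrite !Amat_diag mul_mx_diag mul_diag_mx; apply/matrixP => i j; rewrite !mxE.
case: (eqVneq (sigma p s' i) j) => [ej|nej]; last by rewrite !mulr0n mul0r !mulr0.
rewrite -ej !mulr1n mulr1.
case: (boolP (i %% p ^ s'.+1 < (p - 1) * p ^ s')%N) => hx.
  have [e1 _] := sig_case1 p1 hx; rewrite e1 -[(p ^ s')%N]mul1n (@shift p s' p1 K beta hb) //.
    by rewrite mul1r; case: eqP; rewrite ?expr1.
  by rewrite mul1n; move: hx; rewrite (@P1E' p s' p1); lia.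
have [e2 m2] := sig_case2 p1 hx.
have := @shift p s' p1 K beta hb (sigma p s' i) (p - 1)%N s''.
rewrite e2 m2 => /(_ (ltn_pmod _ _)) ->; last by rewrite expn_gt0 (ltn_trans _ p1).
case: eqP => _; last by rewrite !mul1r.
by rewrite mulrA -exprS subn1 prednK ?(ltn_trans _ p1) // (prim_expr_order hb) !mul1r.
Qed.
End Conc.

Section Conc2.
Variable K : fieldType.
Variables (p r : nat) (beta : K).
Hypothesis p1 : (1 < p)%N.
Hypothesis hb : p.-primitive_root beta.
Local Notation q := (p ^ r)%N.

Lemma mpow_diag n (d : 'rV[K]_n) j : mpow (diag_mx d) j = diag_mx (\row_i (d 0 i ^+ j)).
Proof.
elim: j => [|j IH].
  by rewrite /mpow /= -diag_const_mx; congr diag_mx; apply/rowP => i; rewrite !mxE expr0.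
by rewrite mpowS IH mulmx_diag; congr diag_mx; apply/rowP => i; rewrite !mxE exprS.
Qed.

Lemma Amat_pow s' : mpow (Amat p r beta s') p = 1%:M.
Proof.
rewrite Amat_diag mpow_diag -diag_const_mx; congr diag_mx; apply/rowP => i.
by rewrite !mxE exprAC (prim_expr_order hb) expr1n.
Qed.

Lemma Amat_unit s' : Amat p r beta s' \in unitmx.
Proof.
have := Amat_pow s'; rewrite -(prednK (ltn_trans _ p1)) // mpowS.
by case/mulmx1_unit.
Qed.

Lemma Bmat_unit s' : (s' < r)%N -> Bmat K p r s' \in unitmx.
Proof.
move=> sr.
pose f := fun i : 'I_q => Ordinal (sig_lt p1 sr (ltn_ord i)).
have finj : injective f.
  by move=> i j /(congr1 val) /= /(sig_inj p1) /val_inj.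
have -> : Bmat K p r s' = perm_mx (perm finj).
  by apply/matrixP => i j; rewrite !mxE permE.
exact: unitmx_perm.
Qed.

Lemma digits_eq r' x y : (x < p ^ r')%N -> (y < p ^ r')%N ->
  (forall s', (s' < r')%N -> beta ^+ (x %/ p ^ s') = beta ^+ (y %/ p ^ s')) -> x = y.
Proof.
elim: r' x y => [|r' IH] x y.
  by rewrite expn0 !ltnS !leqn0 => /eqP -> /eqP ->.
move=> hx hy h.
have m0 : (x %% p = y %% p)%N.
  have := h 0%N isT; rewrite !expn0 !divn1 => e.
  by apply/eqP; rewrite -(eq_prim_root_expr hb) e.
have d0 : (x %/ p = y %/ p)%N.
  apply: IH.
  - by rewrite ltn_divLR ?(ltn_trans _ p1) // -expnSr.
  - by rewrite ltn_divLR ?(ltn_trans _ p1) // -expnSr.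
  by move=> s' hs; rewrite -!divnMA -expnS; apply: h.
by rewrite (divn_eq x p) (divn_eq y p) m0 d0.
Qed.

Variable k : nat.

Lemma kron1A_diag s' : kron (1%:M : 'M[K]_k) (Amat p r beta s') =
  diag_mx (\row_(l < k * q) beta ^+ ((mxtens_unindex l).2 %/ p ^ s')).
Proof.
rewrite kron_tens Amat_diag; apply/matrixP => i j.
case: (mxtens_indexP i) => a b; case: (mxtens_indexP j) => a' b'.
rewrite tensmxE !mxE mxtens_indexK /=.
have := inj_eq (can_inj (@mxtens_indexK k q)) (a, b) (a', b').
move=> ->; rewrite xpair_eqE.
by case: (a =P a') => _; case: (b =P b') => _; rewrite /= ?mulr1n ?mulr0n ?mul1r ?mul0r ?mulr0.
Qed.

Definition bd (M : 'M[K]_(k * q)) := forall a b a' b', b != b' ->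
  M (mxtens_index (a, b)) (mxtens_index (a', b')) = 0.

Lemma exact_bd (Y : 'M[K]_(k * q)) :
  (forall s', (s' < r)%N -> Y *m kron 1%:M (Amat p r beta s') = kron 1%:M (Amat p r beta s') *m Y) ->
  bd Y.
Proof.
move=> h a b a' b' nb; apply/eqP; apply: contraR nb => nz; apply/eqP/val_inj.
apply: (digits_eq (ltn_ord b) (ltn_ord b')) => s' hs.
have := congr1 (fun M : 'M[K]_(k * q) => M (mxtens_index (a, b)) (mxtens_index (a', b'))) (h s' hs).
rewrite kron1A_diag mul_mx_diag mul_diag_mx !mxE !mxtens_indexK /= mulrC => /eqP.
by rewrite -subr_eq0 -mulrBl mulf_eq0 (negbTE nz) orbF subr_eq0 => /eqP.
Qed.

Hypothesis k0 : (0 < k)%N.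
Lemma qpos : (0 < q)%N. Proof. by rewrite expn_gt0 (ltn_trans _ p1). Qed.
Definition z0 : 'I_q := Ordinal qpos.
Definition cmp (M : 'M[K]_(k * q)) : 'M[K]_k :=
  \matrix_(a, a') M (mxtens_index (a, z0)) (mxtens_index (a', z0)).

Lemma cmp_mul M N : bd M -> cmp (M *m N) = cmp M *m cmp N.
Proof.
move=> hM; apply/matrixP => a a''; rewrite !mxE sum_tens; apply: eq_bigr => a' _.
rewrite (bigD1 z0) //= big1 ?addr0 ?mxE // => b' nb.
by rewrite hM ?mul0r // eq_sym.
Qed.

Lemma cmp_kron (h : 'M[K]_k) : cmp (kron h 1%:M) = h.
Proof.
by apply/matrixP => a a'; rewrite mxE kron_tens tensmxE mxE eqxx mulr1n mulr1.
Qed.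

Lemma bd_kron (h : 'M[K]_k) : bd (kron h 1%:M).
Proof.
move=> a b a' b' nb; rewrite kron_tens tensmxE mxE (negbTE nb) mulr0n mulr0 //.
Qed.

Lemma cmp1 : cmp 1%:M = 1%:M.
Proof. by rewrite -(kron11 K k q) cmp_kron. Qed.

Lemma cmpZ c M : cmp (c *: M) = c *: cmp M.
Proof. by apply/matrixP => a a'; rewrite !mxE. Qed.

Lemma cmp_unit Y : Y \in unitmx -> bd Y -> cmp Y \in unitmx.
Proof.
move=> uY bY; have : cmp Y *m cmp (invmx Y) = 1%:M by rewrite -cmp_mul // mulmxV // cmp1.
by case/mulmx1_unit.
Qed.

End Conc2.

Lemma kronZr (K : fieldType) m q c (A : 'M[K]_m) (B : 'M[K]_q) : kron A (c *: B) = c *: kron A B.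
Proof. by rewrite !kron_tens; apply/matrixP => i j; rewrite !mxE mulrCA. Qed.

Lemma comm_inv (K : fieldType) m (A d : 'M[K]_m) c : A \in unitmx -> c != 0 ->
  A *m d = c *: (d *m A) -> invmx A *m d = c^-1 *: (d *m invmx A).
Proof.
move=> uA c0 hc.
have e : d *m invmx A = c *: (invmx A *m d).
  have := congr1 (fun M => invmx A *m M *m invmx A) hc.
  rewrite /= -!scalemxAr -!scalemxAl !mulmxA mulVmx // mul1mx.
  by rewrite -[invmx A *m d *m A *m invmx A]mulmxA mulmxV // mulmx1.
by rewrite e scalerA mulVf // scale1r.
Qed.

Lemma mpow_kron1 (K : fieldType) m q (A : 'M[K]_q) j :
  mpow (kron (1%:M : 'M[K]_m) A) j = kron 1%:M (mpow A j).
Proof. by elim: j => [|j IH]; rewrite ?kron11 // !mpowS IH kron_mul mul1mx. Qed.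

Lemma mpow_comm (K : fieldType) m (M : 'M[K]_m) j : mpow M j *m M = M *m mpow M j.
Proof. by elim: j => [|j IH]; rewrite ?mul1mx ?mulmx1 // mpowS -mulmxA IH. Qed.

Lemma mpow_inv (K : fieldType) m (M : 'M[K]_m) j : M \in unitmx ->
  mpow (invmx M) j *m mpow M j = 1%:M.
Proof.
move=> uM; elim: j => [|j IH]; first by rewrite mul1mx.
rewrite mpowS [mpow M j.+1]mpowS -(mpow_comm M j) !mulmxA.
by rewrite -[invmx M *m mpow (invmx M) j *m mpow M j]mulmxA IH mulmx1 mulVmx.
Qed.

Section Main.
Variable K : closedFieldType.
Variables (p r k : nat) (beta : K) (H : 'M[K]_k -> Prop).
Hypothesis pp : prime p.
Hypothesis hb : p.-primitive_root beta.
Hypothesis pn0 : p%:R != 0 :> K.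
Hypothesis k0 : (0 < k)%N.
Hypothesis hH : trivialP H \/ (toral_elab_psubgroup p H /\ connected_centralizer H).
Local Notation q := (p ^ r)%N.
Let p1 : (1 < p)%N := prime_gt1 pp.

Definition Dg (X : 'M[K]_(k * q)) :=
  (exists s', (s' < r)%N /\ X = kron 1%:M (Amat p r beta s')) \/
  (exists h, H h /\ X = kron h 1%:M).
Definition Bg (X : 'M[K]_(k * q)) :=
  exists s', (s' < r)%N /\ X = kron 1%:M (Bmat K p r s').
Definition Cs := pcent (pgen Dg).

Lemma n0 : (0 < k * q)%N. Proof. by rewrite muln_gt0 k0 expn_gt0 (ltn_trans _ p1). Qed.

Lemma H_unit h : H h -> h \in unitmx.
Proof.
case: hH => [ht|[[[[_ _ hV] _] _ _ _] _]] hh; last by case: (hV h hh).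
by have [c [c0 ->]] := (ht h).1 hh; apply: scalar_unit.
Qed.

Lemma Dunit d : Dg d -> d \in unitmx.
Proof.
case=> [[s' [_ ->]]|[h [hh ->]]].
  by apply: kron_unit; [apply: unitmx1 | apply: Amat_unit].
by apply: kron_unit; [apply: H_unit | apply: unitmx1].
Qed.

Lemma Cchar X : Cs X <-> (X \in unitmx /\
  forall d, Dg d -> exists c : K, c != 0 /\ X *m d = c *: (d *m X)).
Proof. exact: pcent_pgen Dunit. Qed.

Lemma C_exact X : X \in unitmx -> (forall d, Dg d -> X *m d = d *m X) -> Cs X.
Proof.
move=> uX h; apply/Cchar; split => // d Dd; exists 1; split; first exact: oner_neq0.
by rewrite scale1r h.
Qed.

Lemma B_in_C X : Bg X -> Cs X.
Proof.
move=> [s' [sr ->]]; apply/Cchar; split.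
  by apply: kron_unit; [apply: unitmx1 | apply: Bmat_unit].
move=> d [[s'' [_ ->]]|[h [_ ->]]].
  exists (if s' == s'' then beta else 1); split.
    by case: (s' == s''); [rewrite (prim_root_eq0 hb) -lt0n prime_gt0 | exact: oner_neq0].
  by rewrite !kron_mul !mul1mx BA // kronZr.
exists 1; split; first exact: oner_neq0.
by rewrite scale1r !kron_mul !mul1mx !mulmx1.
Qed.

Lemma gen1 n (S : 'M[K]_n -> Prop) : gen S 1%:M.
Proof. by move=> H0 gH _; case: gH. Qed.

Lemma gen_mpow n (S : 'M[K]_n -> Prop) M j : gen S M -> gen S (mpow M j).
Proof. by move=> gM; elim: j => [|j IH]; [apply: gen1 | rewrite mpowS; apply: gen_mul]. Qed.

Local Notation A s' := (kron (1%:M : 'M[K]_k) (Amat p r beta s')).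

Lemma Apow s' : mpow (A s') p = 1%:M.
Proof. by rewrite mpow_kron1 (Amat_pow r hb) kron11. Qed.

Lemma reduce m : (m <= r)%N -> forall X : 'M[K]_(k * q), X \in unitmx ->
  (forall s', (s' < r)%N -> exists c : K, c != 0 /\ X *m A s' = c *: (A s' *m X)) ->
  (forall s', (m <= s')%N -> (s' < r)%N -> X *m A s' = A s' *m X) ->
  exists Y (b' : 'M[K]_q), [/\ X = Y *m kron 1%:M b', pgen Bg (kron 1%:M b'),
     Y \in unitmx & forall s', (s' < r)%N -> Y *m A s' = A s' *m Y].
Proof.
elim: m => [|m IH] hm X uX hc he.
  exists X, 1%:M; split => //; first by rewrite kron11 mulmx1.
    by rewrite kron11; apply: gen1.
  by move=> s' hs; apply: he.
have mr : (m < r)%N by [].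
have [c [c0 hcm]] := hc m mr.
have cp : c ^+ p = 1.
  have sc : is_scalar_unit (mpow (A m) p) by rewrite Apow; exists 1; rewrite oner_neq0.
  exact: (char_root n0 (prime_gt0 pp) uX sc hcm).
have [e ce] := prim_rootP hb cp.
set B := Bmat K p r m.
have uB : B \in unitmx by apply: Bmat_unit.
set P := mpow (invmx B) e.
set W := X *m kron 1%:M P.
have rel : forall s'', (s'' < r)%N ->
    W *m A s'' = ((if m == s'' then beta else 1)^-1) ^+ e *: (X *m A s'' *m kron 1%:M P).
  move=> s'' hs; set c'' := (if m == s'' then beta else 1).
  have c''0 : c'' != 0.
    by rewrite /c''; case: (m == s''); [rewrite (prim_root_eq0 hb) -lt0n prime_gt0 | exact: oner_neq0].
  have h1 := comm_inv uB c''0 (BA p1 hb s'' mr).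
  have h2 : Amat p r beta s'' *m invmx B = c'' *: (invmx B *m Amat p r beta s'').
    by rewrite h1 scalerA mulfV // scale1r.
  have h3 := comm_pow e h2.
  have h4 : P *m Amat p r beta s'' = (c''^-1) ^+ e *: (Amat p r beta s'' *m P).
    by rewrite /P h3 scalerA -exprMn mulVf // expr1n scale1r.
  have e5 : kron 1%:M (Amat p r beta s'' *m P) = A s'' *m kron 1%:M P by rewrite kron_mul mul1mx.
  by rewrite /W -mulmxA kron_mul mul1mx h4 kronZr e5 -scalemxAr mulmxA.
have uW : W \in unitmx.
  by rewrite unitmx_mul uX; apply: kron_unit; [apply: unitmx1 | apply: mpow_unit; rewrite unitmx_inv].
have hcW : forall s', (s' < r)%N -> exists c : K, c != 0 /\ W *m A s' = c *: (A s' *m W).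
  move=> s' hs; have [c' [c'0 hc']] := hc s' hs.
  exists (((if m == s' then beta else 1)^-1) ^+ e * c'); split.
    rewrite mulf_neq0 // expf_neq0 // invr_eq0.
    by case: (m == s'); [rewrite (prim_root_eq0 hb) -lt0n prime_gt0 | exact: oner_neq0].
  by rewrite rel // hc' -scalemxAl scalerA -mulmxA.
have heW : forall s', (m <= s')%N -> (s' < r)%N -> W *m A s' = A s' *m W.
  move=> s' ms' hs; rewrite rel //.
  have b0 : beta != 0 by rewrite (prim_root_eq0 hb) -lt0n prime_gt0.
  case: (eqVneq m s') => [<-|nms].
    rewrite hcm ce -scalemxAl scalerA -exprMn mulVf // expr1n scale1r.
    by rewrite -mulmxA.
  rewrite invr1 expr1n scale1r he //; last by rewrite ltn_neqAle nms.
  by rewrite -mulmxA.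
have [Y [b'' [eW gb Yu hY]]] := IH (ltnW hm) W uW hcW heW.
have ek : kron (1%:M : 'M[K]_k) (b'' *m mpow B e) = kron 1%:M b'' *m kron 1%:M (mpow B e).
  by rewrite kron_mul mul1mx.
exists Y, (b'' *m mpow B e); split => //.
+ by rewrite ek mulmxA -eW /W -mulmxA kron_mul mpow_inv // mul1mx kron11 mulmx1.
+ rewrite ek; apply: gen_mul => //; rewrite -mpow_kron1; apply: gen_mpow.
  by apply: gen_sub; left; exists m.
Qed.

Lemma core X : Cs X -> exists Y b, [/\ idcomp Cs Y, pgen Bg b & X = Y *m b].
Proof.
move=> /Cchar [uX hX].
have hcA : forall s', (s' < r)%N -> exists c : K, c != 0 /\ X *m A s' = c *: (A s' *m X).
  by move=> s' hs; apply: hX; left; exists s'.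
have [Y [b' [eX gb uY hY]]] := reduce (leqnn r) uX hcA (fun s' h1 h2 => False_ind _ (elimF idP (leq_gtF h1) h2)).
set kb := kron (1%:M : 'M[K]_k) b' in eX gb.
have ukb : kb \in unitmx by move: uX; rewrite eX unitmx_mul => /andP [].
have eY : Y = X *m invmx kb by rewrite eX -mulmxA mulmxV // mulmx1.
have hYchi : forall h, H h -> exists chi : K, chi != 0 /\
    Y *m kron h 1%:M = chi *: (kron h 1%:M *m Y).
  move=> h hh; have [chi [chi0 hchi]] := hX (kron h 1%:M) (or_intror (ex_intro _ h (conj hh erefl))).
  exists chi; split => //.
  have c1 : kb *m kron h 1%:M = 1 *: (kron h 1%:M *m kb).
    by rewrite scale1r /kb !kron_mul !mul1mx !mulmx1.
  have c2 := comm_inv ukb (oner_neq0 _) c1; rewrite invr1 scale1r in c2.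
  by rewrite eY -mulmxA c2 mulmxA hchi -scalemxAl -mulmxA.
have hYH : forall h, H h -> Y *m kron h 1%:M = kron h 1%:M *m Y.
  move=> h hh; case: hH => [ht|[[_ _ hpow _] hconn]].
    have [c [c0 ->]] := (ht h).1 hh.
    by rewrite -[c%:M]scalemx1 kronZ kron11 scalemx1 scalar_mxC.
  have bdY := exact_bd p1 hb hY.
  set x := cmp p1 Y.
  have ux : x \in unitmx by apply: cmp_unit.
  have hx : forall h', H h' -> exists c : K, c != 0 /\ x *m h' = c *: (h' *m x).
    move=> h' hh'; have [chi [chi0 hchi]] := hYchi h' hh'.
    exists chi; split => //.
    have := congr1 (@cmp K p r p1 k) hchi.
    by rewrite cmp_mul // cmpZ cmp_mul ?cmp_kron //; apply: bd_kron.
  have [Z [ZC sZ Z1 cZ Zx]] := hconn x (conj ux hx).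
  have hZ : forall B, Z B -> B \in unitmx /\ exists c : K, c != 0 /\ B *m h = c *: (h *m B).
    by move=> B /ZC [uB hB]; split => //; apply: hB.
  have xh := comm_of_conn k0 pp pn0 (H_unit hh) (hpow h hh) hZ Z1 cZ Zx.
  have [chi [chi0 hchi]] := hYchi h hh.
  have xh2 : x *m h = chi *: (h *m x).
    have := congr1 (@cmp K p r p1 k) hchi.
    by rewrite cmp_mul // cmpZ cmp_mul ?cmp_kron //; apply: bd_kron.
  have chi1 : chi = 1.
    move: xh2; rewrite xh => /eqP; rewrite -subr_eq0 -{1}[h *m x]scale1r -scalerBl.
    rewrite scaler_eq0 (negbTE (unit_neq0 k0 _)) ?orbF; last by rewrite unitmx_mul H_unit.
    by rewrite subr_eq0 eq_sym => /eqP.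
  by rewrite hchi chi1 scale1r.
have hYd : forall d, Dg d -> Y *m d = d *m Y.
  by move=> d [[s' [hs ->]]|[h [hh ->]]]; [apply: hY | apply: hYH].
exists Y, kb; split => //.
apply: (pencil_idcomp n0 uY) => a b u; apply: C_exact => // d Dd.
by rewrite mulmxDl mulmxDr -!scalemxAl -!scalemxAr mul1mx mulmx1 hYd.
Qed.

End Main.

Unset Implicit Arguments.

Theorem theorem4p28 (K : closedFieldType) (p s t r k : nat) (beta : K)
  (H : 'M[K]_k -> Prop) :
  prime p -> odd p -> p \notin [pchar K] -> p.-primitive_root beta ->
  (1 <= s)%N -> (1 <= t)%N -> coprime p t ->
  (1 <= r <= s)%N -> (k * p ^ r = p ^ s * t)%N ->
  (trivialP H \/ (toral_elab_psubgroup p H /\ connected_centralizer H)) ->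
  let Dgen := fun X : 'M[K]_(k * p ^ r) =>
    (exists s', (s' < r)%N /\ X = kron 1%:M (@Amat K p r beta s')) \/
    (exists h, H h /\ X = kron h 1%:M) in
  let C := pcent (pgen Dgen) in
  let C0 := idcomp C in
  let Bgen := fun X : 'M[K]_(k * p ^ r) =>
    exists s', (s' < r)%N /\ X = kron 1%:M (@Bmat K p r s') in
  (forall X, C X <-> pgen (fun Y => C0 Y \/ Bgen Y) X) /\
  (forall X, C X <-> exists c b, [/\ C0 c, pgen Bgen b & X = c *m b]).
Proof.
move=> pp _ hpc hb s1 t1 _ _ hk hH Dgen C C0 Bgen.
have k0 : (0 < k)%N.
  have : (0 < k * p ^ r)%N by rewrite hk muln_gt0 expn_gt0 prime_gt0.
  by rewrite muln_gt0 => /andP [].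
have pn0 : p%:R != 0 :> K by move: hpc; rewrite !inE pp.
have core' := @core K p r k beta H pp hb pn0 k0 hH.
have Cg := pcent_group (pgen (@Dg K p r k beta H)).
have Bsub : forall Y, Bgen Y -> C Y by move=> Y BY; exact: (@B_in_C K p r k beta H pp hb hH Y BY).
have C0C : forall Y, C0 Y -> C Y by move=> Y [Z [ZC _ _ _ ZY]]; apply: ZC.
have pBC : forall b, pgen Bgen b -> C b.
  move=> b gb; apply: (pgen_sub_group Cg _ _ gb); [exact: pcent_scalar | exact: Bsub].
split => X; split.
- move=> CX; have [Y [b [C0Y gbB ->]]] := core' X CX.
  apply: gen_mul; first by apply: gen_sub; left; left.
  apply: gen_mono gbB => Z [BZ|sZ]; apply: gen_sub; [by left; right | by right].
- move=> gX; apply: (pgen_sub_group Cg _ _ gX); first exact: pcent_scalar.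
  by move=> Y [/C0C|/Bsub].
- by move=> CX; have [Y [b [C0Y gbB ->]]] := core' X CX; exists Y, b.
- move=> [c [b [C0c gb ->]]]; case: Cg => _ hM _; apply: hM; [exact: C0C | exact: pBC].
Qed.
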